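(* Let $H$ be the space of continuous $1$-periodic real functions with mean zero, and let $\Phi:H\to[0,\infty)$ be the functional defined below. Then $\Phi$ is bounded and continuous with respect to the $L^\infty$ norm; in particular, for all $\tilde q,\tilde q_1,\tilde q_2\in H$, \[ |\Phi(\tilde q)|\le\|\tilde q\|_{L^\infty},\qquad |\Phi(\tilde q_1)-\Phi(\tilde q_2)|\le\|\tilde q_1-\tilde q_2\|_{L^\infty}. \]
   Context: For $\tilde q\in H$, let $\psi>0$ be the positive $1$-periodic ground state eigenfunction of $-\frac{d^2}{dx^2}+\tilde q$ with periodic boundary conditions and $\tilde p=\psi'/\psi$; then $\tilde p$ is $1$-periodic, $\int_0^1\tilde p=0$, and $\tilde q=\tilde p'+\tilde p^2-\int_0^1\tilde p^2$. Define $\Phi(\tilde q)=\int_0^1\tilde p(x)^2\,dx$. *)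

(* Defs.v *)
From Stdlib Require Import Reals.
From Coquelicot Require Import Coquelicot.
Open Scope R_scope.

Definition periodic1 (f : R -> R) : Prop := forall x, f (x + 1) = f x.

Definition in_H (q : R -> R) : Prop :=
  (forall x, continuous q x) /\ periodic1 q /\ RInt q 0 1 = 0.

(* L^infinity norm (sup of |f| over R; for periodic f equal to sup over a period) *)
Definition Linf (f : R -> R) : R :=
  real (Lub_Rbar (fun y => exists x, y = Rabs (f x))).

Definition periodic_eigen (q : R -> R) (lam : R) (phi : R -> R) : Prop :=
  periodic1 phi /\
  (exists x, phi x <> 0) /\
  (forall x, ex_derive phi x /\ ex_derive (Derive phi) x) /\
  (forall x, - Derive_n phi 2 x + q x * phi x = lam * phi x).

Definition ground_state (q : R -> R) (lam : R) (psi : R -> R) : Prop :=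
  periodic_eigen q lam psi /\
  (forall x, 0 < psi x) /\
  (forall mu phi, periodic_eigen q mu phi -> lam <= mu).

Definition ptilde (psi : R -> R) (x : R) : R := Derive psi x / psi x.

Definition IsPhi (q : R -> R) (v : R) : Prop :=
  exists lam psi, ground_state q lam psi /\
    v = RInt (fun x => (ptilde psi x) ^ 2) 0 1.

(* Main.v *)
Require Import Defs.
From Stdlib Require Import Reals Lra.
From Coquelicot Require Import Coquelicot.
Open Scope R_scope.

Lemma D2 (psi : R -> R) x : Derive_n psi 2 x = Derive (Derive psi) x.
Proof. reflexivity. Qed.

Lemma Dshift (f : R -> R) x : ex_derive f (x+1) -> Derive (fun y => f (y + 1)) x = Derive f (x+1).
Proof. intro H. apply is_derive_unique.
  apply (is_derive_ext (fun y => f ((fun y => y + 1) y))). reflexivity.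
  replace (Derive f (x+1)) with (1 * Derive f (x+1)) by ring.
  apply (is_derive_comp f (fun y => y + 1)). apply Derive_correct; auto.
  auto_derive. auto. ring. Qed.

Lemma Phi_eq q lam psi : in_H q -> ground_state q lam psi ->
  RInt (fun x => (ptilde psi x) ^ 2) 0 1 = - lam.
Proof.
  intros [Hqc [Hqp Hq0]] [[Hper [_ [Hd Heq]]] [Hpos _]].
  set (p := ptilde psi).
  assert (Hdp : forall x, is_derive p x (q x - lam - p x ^ 2)).
  { intro x. destruct (Hd x) as [H1 H2].
    assert (Hx := Heq x). rewrite D2 in Hx.
    assert (Hn : psi x <> 0) by (specialize (Hpos x); lra).
    replace (q x - lam - p x ^ 2) with
      ((Derive (Derive psi) x * psi x - Derive psi x * Derive psi x) / psi x ^ 2).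
    2: { unfold p, ptilde. replace (Derive (Derive psi) x) with ((q x - lam) * psi x) by lra.
    field. auto. }
    eapply is_derive_ext.
    2: { apply (is_derive_div (Derive psi) psi x _ _ (Derive_correct _ _ H2) (Derive_correct _ _ H1) Hn). }
    intro t. reflexivity. }
  assert (Hpc : forall x, continuous p x).
  { intro x. apply (ex_derive_continuous (K:=R_AbsRing) (V:=R_NormedModule)). eexists. apply Hdp. }
  assert (Hdc : forall x, continuous (fun x => q x - lam - p x ^ 2) x).
  { intro x. apply (continuous_minus (fun x => q x - lam) (fun x => p x ^ 2)).
    apply (continuous_minus q (fun _ => lam)). apply Hqc. apply continuous_const.
    apply (continuous_ext (fun x => mult (p x) (mult (p x) 1))). intro t. reflexivity.
    apply (continuous_mult (U:=R_UniformSpace) (K:=R_AbsRing)). apply Hpc. apply (continuous_mult (U:=R_UniformSpace) (K:=R_AbsRing)). apply Hpc. apply continuous_const. }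
  assert (HI1 := is_RInt_derive p (fun x => q x - lam - p x ^ 2) 0 1
     (fun x _ => Hdp x) (fun x _ => Hdc x)).
  assert (Hp1 : p 1 = p 0).
  { unfold p, ptilde. replace 1 with (0 + 1) by ring. rewrite Hper.
    f_equal.
    transitivity (Derive (fun y => psi (y + 1)) 0).
    rewrite Dshift. f_equal; ring. apply Hd.
    apply Derive_ext. intro; apply Hper. }
  rewrite Hp1 in HI1.
  assert (HIq : is_RInt q 0 1 0).
  { pattern 0 at 2. rewrite <- Hq0. apply (RInt_correct (V:=R_CompleteNormedModule)). apply (ex_RInt_continuous (V:=R_CompleteNormedModule)). intros; apply Hqc. }
  assert (HIc := is_RInt_const 0 1 lam).
  assert (H := is_RInt_minus _ _ _ _ _ _ (is_RInt_minus _ _ _ _ _ _ HIq HIc) HI1).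
  apply is_RInt_unique.
  replace (- lam) with (minus (minus 0 (scal (1 - 0) lam)) (minus (p 0) (p 0))).
  2: { unfold minus, plus, opp, scal; simpl. unfold mult; simpl. ring. }
  eapply is_RInt_ext. 2: apply H.
  intros x _. unfold minus, plus, opp; simpl. ring.
Qed.
Lemma Dper (f : R -> R) : periodic1 f -> (forall x, ex_derive f x) -> Derive f 1 = Derive f 0.
Proof. intros Hp Hd. replace 1 with (0+1) by ring. rewrite <- Dshift by auto.
  apply Derive_ext. intro; apply Hp. Qed.

Lemma cmp q1 q2 l1 l2 psi1 psi2 M :
 (forall x, ex_derive psi1 x /\ ex_derive (Derive psi1) x) ->
 (forall x, ex_derive psi2 x /\ ex_derive (Derive psi2) x) ->
 (forall x, Derive (Derive psi1) x = (q1 x - l1) * psi1 x) ->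
 (forall x, Derive (Derive psi2) x = (q2 x - l2) * psi2 x) ->
 periodic1 psi1 -> periodic1 psi2 -> (forall x, 0 < psi1 x) -> (forall x, 0 < psi2 x) ->
 (forall x, Rabs (q1 x - q2 x) <= M) -> l1 - l2 <= M.
Proof.
  intros H1 H2 E1 E2 P1 P2 Q1 Q2 HM.
  destruct (Rle_or_lt (l1 - l2) M) as [h|h]; [exact h|exfalso].
  set (W := (psi1 * Derive psi2 - psi2 * Derive psi1)%F).
  set (W' := fun x => psi1 x * psi2 x * (q2 x - l2 - q1 x + l1)).
  assert (HD : forall c, 0 <= c <= 1 -> derivable_pt_lim W c (W' c)).
  { intros c _. destruct (H1 c) as [a1 b1]. destruct (H2 c) as [a2 b2].
    apply Derive_correct, is_derive_Reals in a1, b1, a2, b2.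
    replace (W' c) with ((Derive psi1 c * Derive psi2 c + psi1 c * Derive (Derive psi2) c)
       - (Derive psi2 c * Derive psi1 c + psi2 c * Derive (Derive psi1) c)).
    apply derivable_pt_lim_minus; apply derivable_pt_lim_mult; auto.
    unfold W'. rewrite E1, E2. ring. }
  destruct (MVT_cor2 W W' 0 1 Rlt_0_1 HD) as [c [Hc _]].
  assert (HW : W 1 = W 0).
  { unfold W, minus_fct, mult_fct. rewrite !Dper; auto.
    replace 1 with (0+1) by ring. rewrite P1, P2. ring.
    intro; apply H1. intro; apply H2. }
  rewrite HW in Hc.
  assert (0 < W' c).
  { unfold W'. apply Rmult_lt_0_compat. apply Rmult_lt_0_compat; auto.
    specialize (HM c). apply Rabs_le_between in HM. lra. }
  lra.
Qed.

Lemma Zper f : periodic1 f -> forall k y, f (y + IZR k) = f y.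
Proof. intros Hp k. induction k using Z.peano_ind; intro y.
  - rewrite Rplus_0_r. reflexivity.
  - rewrite succ_IZR. replace (y + (IZR k + 1)) with ((y + IZR k) + 1) by ring.
    rewrite Hp. apply IHk.
  - rewrite <- Z.sub_1_r, minus_IZR. rewrite <- (Hp (y + (IZR k - IZR 1))).
    replace (y + (IZR k - IZR 1) + 1) with (y + IZR k) by (simpl; ring). apply IHk.
Qed.

Lemma bnd f : (forall x, continuous f x) -> periodic1 f -> exists M, forall x, Rabs (f x) <= M.
Proof. intros Hc Hp.
  destruct (continuity_ab_maj (fun x => Rabs (f x)) 0 1) as [m [Hm _]]. lra.
  { intros c _. apply continuity_pt_filterlim.
    apply (continuous_comp f Rabs). apply Hc. apply continuous_Rabs. }
  exists (Rabs (f m)). intro x.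
  destruct (base_Int_part x) as [a b].
  replace (f x) with (f (x - IZR (Int_part x))).
  apply (Hm (x - IZR (Int_part x))). lra.
  rewrite <- (Zper f Hp (Int_part x) (x - IZR (Int_part x))).
  f_equal. change (x - IZR (Int_part x) + IZR (Int_part x) = x :> R). ring.
Qed.

Lemma linf f : (exists M, forall x, Rabs (f x) <= M) -> forall x, Rabs (f x) <= Linf f.
Proof. intros [M HM] x. unfold Linf.
  destruct (Lub_Rbar_correct (fun y => exists x, y = Rabs (f x))) as [ub lub].
  assert (h1 := ub (Rabs (f x)) (ex_intro _ x eq_refl)).
  assert (h2 : Rbar_le (Lub_Rbar (fun y => exists x, y = Rabs (f x))) M).
  { apply lub. intros y [z ->]. simpl. apply HM. }
  destruct (Lub_Rbar (fun y => exists x, y = Rabs (f x))); simpl in *; tauto.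
Qed.

Lemma gs_facts q lam psi : ground_state q lam psi ->
  (forall x, ex_derive psi x /\ ex_derive (Derive psi) x) /\
  (forall x, Derive (Derive psi) x = (q x - lam) * psi x) /\
  periodic1 psi /\ (forall x, 0 < psi x).
Proof. intros [[Hper [_ [Hd Heq]]] [Hpos _]]. split; [exact Hd|]. split; [|split; assumption].
  intro x. specialize (Heq x). rewrite D2 in Heq. lra. Qed.

Lemma const_facts :
  (forall x, ex_derive (fun _ : R => 1) x /\ ex_derive (Derive (fun _ : R => 1)) x) /\
  (forall x, Derive (Derive (fun _ : R => 1)) x = ((fun _ => 0) x - 0) * (fun _ : R => 1) x) /\
  periodic1 (fun _ : R => 1) /\ (forall x : R, 0 < (fun _ : R => 1) x).
Proof.
  assert (E : forall x, Derive (fun _ : R => 1) x = 0) by (intro; apply Derive_const).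
  repeat split.
  - apply ex_derive_const.
  - apply (ex_derive_ext (fun _ => 0)). intro; symmetry; apply E. apply ex_derive_const.
  - intro x. rewrite (Derive_ext _ (fun _ => 0) x E). rewrite Derive_const. ring.
  - intro x. lra.
Qed.

Theorem lemma2 :
  (forall (q : R -> R) (v : R), in_H q -> IsPhi q v -> Rabs v <= Linf q) /\
  (forall (q1 q2 : R -> R) (v1 v2 : R),
      in_H q1 -> in_H q2 -> IsPhi q1 v1 -> IsPhi q2 v2 ->
      Rabs (v1 - v2) <= Linf (fun x => q1 x - q2 x)).
Proof.
  split.
  - intros q v Hq [lam [psi [Hg ->]]].
    rewrite (Phi_eq q lam psi Hq Hg).
    destruct Hq as [Hqc [Hqp _]].
    assert (HL := linf q (bnd q Hqc Hqp)).
    destruct (gs_facts q lam psi Hg) as [a [b [c d]]].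
    destruct const_facts as [a' [b' [c' d']]].
    assert (u1 := cmp q (fun _ => 0) lam 0 psi (fun _ => 1) (Linf q) a a' b b' c c' d d').
    assert (u2 := cmp (fun _ => 0) q 0 lam (fun _ => 1) psi (Linf q) a' a b' b c' c d' d).
    apply Rabs_le. split.
    + assert (lam <= Linf q). { apply Rle_trans with (lam - 0). lra. apply u1.
        intro x. rewrite Rminus_0_r. apply HL. } lra.
    + assert (0 - lam <= Linf q). { apply u2.
        intro x. rewrite Rminus_0_l, Rabs_Ropp. apply HL. } lra.
  - intros q1 q2 v1 v2 Hq1 Hq2 [l1 [psi1 [Hg1 ->]]] [l2 [psi2 [Hg2 ->]]].
    rewrite (Phi_eq q1 l1 psi1 Hq1 Hg1), (Phi_eq q2 l2 psi2 Hq2 Hg2).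
    destruct Hq1 as [Hqc1 [Hqp1 _]]. destruct Hq2 as [Hqc2 [Hqp2 _]].
    assert (HL : forall x, Rabs (q1 x - q2 x) <= Linf (fun x => q1 x - q2 x)).
    { apply (linf (fun x => q1 x - q2 x)). apply bnd.
      intro x. apply (continuous_minus (V:=R_NormedModule) q1 q2); auto.
      intro x. unfold periodic1 in *. rewrite Hqp1, Hqp2. reflexivity. }
    destruct (gs_facts q1 l1 psi1 Hg1) as [a [b [c d]]].
    destruct (gs_facts q2 l2 psi2 Hg2) as [a' [b' [c' d']]].
    assert (u1 := cmp q1 q2 l1 l2 psi1 psi2 _ a a' b b' c c' d d' HL).
    assert (u2 := cmp q2 q1 l2 l1 psi2 psi1 (Linf (fun x => q1 x - q2 x)) a' a b' b c' c d' d).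
    assert (l2 - l1 <= Linf (fun x => q1 x - q2 x)).
    { apply u2. intro x. rewrite Rabs_minus_sym. apply HL. }
    apply Rabs_le. lra.
Qed.
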